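(* Let $a\in K$ and let $b_1,\dots,b_\ell\in K$ be distinct ($\ell\ge1$). Suppose that either $(a,b_i)\in S$ for all $i$, or $(b_i,a)\in S$ for all $i$. Then $\pi\ge\ell(n-2q-m+1)+q-m-1$.
   Context: $G$ is a set of size $n$ and $G(\circ)$, $G(\ast)$ are distinct groups on $G$ with the same identity element. $\mathrm{diff}(\circ,\ast)=\{(a,b):a\circ b\ne a\ast b\}$, $\mathrm{dist}(\circ,\ast)=|\mathrm{diff}(\circ,\ast)|$, $\mathrm{dist}_a=|\{b:a\circ b\ne a\ast b\}|$; $H=\{a:\mathrm{dist}_a=0\}$, $h=|H|$; $K=\{a:\mathrm{dist}_a<n/3\}$, $k=|K|$; $m=\min\{\mathrm{dist}_a:\mathrm{dist}_a>0\}$. Standing assumption: $m\ge 3$. Let $q=\lceil n/3\rceil$ and the profit $\pi=\mathrm{dist}(\circ,\ast)-((k-h)m+(n-k)q)$. Let $S=\{(a,b)\in\mathrm{diff}(\circ,\ast):a,b\in K,\ a\ne b\}$, $s=|S|$. *)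

(* Defs.v *)
From HB Require Import structures.
From mathcomp Require Import all_boot all_order all_algebra.
Set Implicit Arguments. Unset Strict Implicit. Unset Printing Implicit Defensive.

Section GroupDist.
Variable T : finType.

Definition is_group (op : T -> T -> T) (e : T) : Prop :=
  associative op /\ left_id e op /\ right_id e op /\
  (forall x, exists y, op y x = e /\ op x y = e).

Variables (op1 op2 : T -> T -> T).

Definition diffset : {set T * T} :=
  [set p : T * T | op1 p.1 p.2 != op2 p.1 p.2].
Definition dist : nat := #|diffset|.
Definition dista (a : T) : nat := #|[set b : T | op1 a b != op2 a b]|.
Definition Hset : {set T} := [set a : T | dista a == 0%N].
Definition hh : nat := #|Hset|.
(* K = {a : dist_a < n/3}, i.e. 3 * dist_a < n *)
Definition Kset : {set T} := [set a : T | 3 * dista a < #|T|].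
Definition kk : nat := #|Kset|.
(* m = min {dist_a : dist_a > 0}; default #|T| is irrelevant when the
   groups are distinct since dist_a <= #|T| *)
Definition mm : nat := \big[minn/#|T|]_(a | 0 < dista a) dista a.
(* q = ceil(n/3) *)
Definition qq : nat := (#|T| + 2) %/ 3.
Definition profit : int :=
  (dist%:Z - (((kk%:Z - hh%:Z) * mm%:Z) + ((#|T|%:Z - kk%:Z) * qq%:Z)))%R.
Definition Sset : {set T * T} :=
  [set p : T * T | [&& p \in diffset, p.1 \in Kset, p.2 \in Kset & p.1 != p.2]].

End GroupDist.

(* Main.v *)
Require Import Defs.
From HB Require Import structures.
From mathcomp Require Import all_boot all_order all_algebra.
From mathcomp Require Import zify.
Import Order.TTheory GRing.Theory Num.Theory.

Lemma grp_lcancel (T : finType) (op : T -> T -> T) e : is_group op e ->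
  forall x y z, op x y = op x z -> y = z.
Proof.
case=> [A [L [R I]]] x y z H. case: (I x) => w [Hw1 Hw2].
by rewrite -(L y) -(L z) -Hw1 -!A H.
Qed.

Lemma grp_rcancel (T : finType) (op : T -> T -> T) e : is_group op e ->
  forall x y z, op y x = op z x -> y = z.
Proof.
case=> [A [L [R I]]] x y z H. case: (I x) => w [Hw1 Hw2].
by rewrite -(R y) -(R z) -Hw2 !A H.
Qed.

Lemma card_sumb (U : finType) (A : {set U}) : #|A| = \sum_x ((x \in A) : nat).
Proof. by rewrite -sum1_card big_mkcond /=; apply: eq_bigr => x _; case: (x \in A). Qed.

Lemma arith (l n q m d g S : int) : (1 <= l -> d < q -> (n - d - m - q) * l <= S -> d - m <= g -> l*(n - 2*q - m + 1) + q - m - 1 <= g + S)%R.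
Proof. move=> h1 h2 h3 h4. have : (0 <= (l - 1) * (q - 1 - d))%R by apply: mulr_ge0; lia. nia. Qed.

Section S.
Variables (T : finType) (op1 op2 : T -> T -> T) (e : T).
Hypotheses (G1 : is_group op1 e) (G2 : is_group op2 e).

Lemma key u v : op1 u v != op2 u v ->
  #|T| <= dista op1 op2 (op1 u v) + dista op1 op2 u + dista op1 op2 v.
Proof.
move=> huv.
set c := op1 u v.
set X := [set x | op1 c x != op2 c x].
set Y := [set x | op1 v x != op2 v x].
set Z := [set x | op1 u (op1 v x) != op2 u (op1 v x)].
have hX : dista op1 op2 c = #|X| by [].
have hY : dista op1 op2 v = #|Y| by [].
have hZ : #|Z| = dista op1 op2 u.
  have -> : Z = (op1 v) @^-1: [set y | op1 u y != op2 u y].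
    by apply/setP => x; rewrite !inE.
  rewrite card_preimset //; exact: grp_lcancel G1 v.
have sub : ~: X \subset Y :|: Z.
  apply/subsetP => x; rewrite !inE negbK => /eqP hx.
  case: eqP => [hy|//] /=; case: eqP => [hz|//] /=.
  case/negP: huv; apply/eqP.
  have H := (@grp_rcancel T op2 e G2 x (op1 u v) (op2 u v)); apply: H.
  case: G1 => A1 _; case: G2 => A2 _.
  by rewrite -hx /c -A1 hz hy A2.
have := cardsC X. have := subset_leq_card sub. have := cardsU Y Z.
rewrite hX hY -hZ. lia.
Qed.


Local Notation dA := (dista op1 op2).
Local Notation K := (Kset op1 op2).
Local Notation H := (Hset op1 op2).
Local Notation m := (mm op1 op2).
Local Notation q := (qq T).

Definition gg (x : T) : int := ((dA x)%:Z - (((x \in K):nat)%:Z - ((x \in H):nat)%:Z) * m%:Z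
   - (1 - ((x \in K):nat)%:Z) * q%:Z)%R.

Lemma sZ (F : T -> nat) : ((\sum_x F x)%N%:Z = \sum_x (F x)%:Z)%R.
Proof. by rewrite -natz natr_sum; apply: eq_bigr => x _; rewrite natz. Qed.

Lemma cardZ (A : {set T}) : (\sum_x ((x \in A):nat)%:Z = #|A|%:Z)%R.
Proof. by rewrite -sZ -card_sumb. Qed.

Lemma dist_sum : dist op1 op2 = \sum_x dA x.
Proof.
rewrite (eq_bigr (fun x => \sum_y (((x,y) \in diffset op1 op2):nat))); last first.
  by move=> x _; rewrite /dista card_sumb; apply: eq_bigr => y _; rewrite !inE.
rewrite pair_big /dist card_sumb; apply: eq_bigr => [[x y]] _ //.
Qed.

Lemma profit_sum : profit op1 op2 = (\sum_x gg x)%R.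
Proof.
rewrite /profit dist_sum /gg !sumrB -!mulr_suml !sumrB sZ !cardZ.
have -> : (\sum_(x : T) (1:int) = #|T|%:Z)%R.
  rewrite -cardsT -(cardZ [set: T]); apply: eq_bigr => x _; by rewrite in_setT.
rewrite /kk /hh. set S1 := (\sum_(i : T) _)%R. lia.
Qed.

Lemma mm_le x : 0 < dA x -> m <= dA x.
Proof.
move=> h; rewrite /mm.
have : x \in index_enum T by rewrite mem_index_enum.
elim: (index_enum T) => [//|y r IH].
rewrite in_cons big_cons => /orP [/eqP <-|/IH hr].
  by rewrite h geq_minl.
case: (0 < dA y) => //; exact: leq_trans (geq_minr _ _) hr.
Qed.

Lemma g_ge0 x : 0 < #|T| -> (0 <= gg x)%R.
Proof.
move=> n0; rewrite /gg.
case hK: (x \in K); case hH: (x \in H) => /=.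
- lia.
- move: hH; rewrite inE => /negbT; rewrite -lt0n => /mm_le; lia.
- move: hH hK; rewrite !inE => /eqP ->; lia.
- move: hK; rewrite inE /qq => /negbT; rewrite -leqNgt; lia.
Qed.

Lemma g_K x : x \in K -> ((dA x)%:Z - m%:Z <= gg x)%R.
Proof. rewrite /gg => ->; case: (x \in H) => /=; lia. Qed.

Lemma g_notK x : x \notin K -> gg x = ((dA x)%:Z - q%:Z)%R.
Proof.
move=> hK; have hH : x \notin H.
  apply/negP; rewrite inE => /eqP h0; move: hK; rewrite inE h0.
  have n0 : 0 < #|T| by apply/card_gt0P; exists x.
  by rewrite muln0 n0.
rewrite /gg (negbTE hK) (negbTE hH) /=; lia.
Qed.

Lemma bound a l (b c : 'I_l -> T) : 0 < l -> a \in K -> (forall i, b i \in K) ->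
  injective b -> injective c -> (forall i, a != b i) ->
  (forall i, #|T| <= dA (c i) + dA a + dA (b i)) ->
  (l%:Z * (#|T|%:Z - 2 * (qq T)%:Z - (mm op1 op2)%:Z + 1)
     + (qq T)%:Z - (mm op1 op2)%:Z - 1 <= profit op1 op2)%R.
Proof.
move=> l0 aK bK binj cinj ab hc.
have aK' := aK; rewrite inE in aK'.
have cK : forall i, c i \notin K.
  move=> i; have := hc i; have := bK i; rewrite !inE; lia.
have n0 : 0 < #|T| by lia.
set B := b @: [set: 'I_l].
set C := c @: [set: 'I_l].
have aB : a \notin B :|: C.
  rewrite in_setU negb_or; apply/andP; split.
    by apply/negP => /imsetP [i _ hi]; move: (ab i); rewrite hi eqxx.
  by apply/negP => /imsetP [i _ hi]; move: (cK i); rewrite -hi aK.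
have dBC : [disjoint B & C].
  rewrite disjoints_subset; apply/subsetP => x /imsetP [i _ ->]; rewrite inE; apply/negP => /imsetP [j _ hj].
  by move: (cK j); rewrite -hj bK.
rewrite profit_sum (bigID (mem (a |: (B :|: C)))) /=.
apply: ler_wpDr; first by apply: sumr_ge0 => x _; exact: g_ge0 x n0.
rewrite big_setU1 //= (eq_bigl [predU B & C]); last by move=> x; rewrite !inE.
rewrite bigU //= /B /C (big_imset _ (h:=b)) /=; last by move=> i j _ _ /binj.
rewrite (big_imset _ (h:=c)) /=; last by move=> i j _ _ /cinj.
rewrite -big_split /=.
have hpt : forall i, ((#|T|%:Z - (dA a)%:Z - m%:Z - q%:Z) <= gg (b i) + gg (c i))%R.
  move=> i; have := g_K (b i) (bK i). rewrite (g_notK (c i) (cK i)).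
  have := hc i. lia.
have hS : ((#|T|%:Z - (dA a)%:Z - m%:Z - q%:Z) * l%:Z <=
        \sum_(i in [set: 'I_l]) (gg (b i) + gg (c i)))%R.
  have := @ler_sum _ _ (index_enum 'I_l) (mem [set: 'I_l])
   (fun=> (#|T|%:Z - (dA a)%:Z - m%:Z - q%:Z)%R) _ (fun i _ => hpt i).
  by rewrite sumr_const cardsT card_ord -mulr_natr natz.
have := g_K a aK.
have : dA a < q by rewrite /qq; lia.
move=> hq hg; have := (@arith l%:Z #|T|%:Z q%:Z m%:Z (dA a)%:Z (gg a) _ _ _ hS hg). apply; lia.
Qed.

End S.

Theorem lemma9p4 (T : finType) (op1 op2 : T -> T -> T) (e : T)
  (G1 : is_group op1 e) (G2 : is_group op2 e)
  (distinct : exists a b : T, op1 a b != op2 a b)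
  (m_ge3 : 3 <= mm op1 op2)
  (a : T) (l : nat) (b : 'I_l -> T)
  (l_pos : 0 < l)
  (aK : a \in Kset op1 op2)
  (bK : forall i, b i \in Kset op1 op2)
  (b_inj : injective b)
  (hS : (forall i, (a, b i) \in Sset op1 op2) \/
        (forall i, (b i, a) \in Sset op1 op2)) :
  (l%:Z * (#|T|%:Z - 2 * (qq T)%:Z - (mm op1 op2)%:Z + 1)
     + (qq T)%:Z - (mm op1 op2)%:Z - 1 <= profit op1 op2)%R.
Proof.
case: hS => hS.
- apply: (@bound T op1 op2 a l b (fun i => op1 a (b i))) => //.
  + by move=> i j /(@grp_lcancel _ _ _ G1 _ _ _) /b_inj.
  + by move=> i; move: (hS i); rewrite !inE /= => /and4P [].
  + move=> i; apply: (@key _ _ _ _ G1 G2); by move: (hS i); rewrite !inE /= => /and4P [].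
- apply: (@bound T op1 op2 a l b (fun i => op1 (b i) a)) => //.
  + by move=> i j /(@grp_rcancel _ _ _ G1 _ _ _) /b_inj.
  + by move=> i; move: (hS i); rewrite !inE /= => /and4P [_ _ _]; rewrite eq_sym.
  + move=> i; have := (@key _ _ _ _ G1 G2 (b i) a).
    move: (hS i); rewrite !inE /= => /and4P [h _ _ _] /(_ h); lia.
Qed.
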